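(* Let $M_{c,2}$ be the set of positive integers $n$ such that $g(n)-\gamma_c(X_n)\ge 2$. Then the set $\omega(M_{c,2})=\{\omega(n): n\in M_{c,2}\}$ is unbounded; that is, for every $N$ there is $n\in M_{c,2}$ with more than $N$ distinct prime factors.
   Context: For a positive integer $n$, the unitary Cayley graph $X_n$ is the graph on vertex set $\{0,1,\dots,n-1\}$ in which $a$ and $b$ are adjacent if and only if $\gcd(a-b,n)=1$. The Jacobsthal function $g(n)$ is the least positive integer $m$ such that every set of $m$ consecutive integers contains an integer coprime to $n$. A set $S$ of vertices of a graph is dominating if every vertex is in $S$ or adjacent to a vertex of $S$. A dominating cycle is a cycle in the graph whose vertex set is a dominating set; the cycle domination number $\gamma_c(G)$ is the minimum number of vertices of a dominating cycle of $G$ (for $X_n$ such a cycle always exists, e.g. $(0,1,\dots,n-1)$). $\omega(n)$ denotes the number of distinct prime factors of $n$. *)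

(* Defs.v *)
From HB Require Import structures.
From mathcomp Require Import all_boot all_order all_algebra.
From Stdlib Require Import ClassicalEpsilon.
Set Implicit Arguments. Unset Strict Implicit. Unset Printing Implicit Defensive.
Import Order.TTheory GRing.Theory Num.Theory.

Definition pbool (P : Prop) : bool :=
  if excluded_middle_informative P then true else false.

Definition ucay_vertex (n v : nat) : bool := v < n.
Definition ucay_adj (n : nat) (a b : nat) : bool :=
  (a != b) && coprimez (a%:Z - b%:Z)%R n%:Z.

Definition ucay_cycle (n : nat) (s : seq nat) : Prop :=
  [/\ all (ucay_vertex n) s, uniq s, 3 <= size s & cycle (ucay_adj n) s].

Definition ucay_dominating (n : nat) (S : seq nat) : Prop :=
  forall v, v < n -> v \in S \/ exists2 u, u \in S & ucay_adj n u v.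

Definition has_dom_cycle_of_size (n k : nat) : Prop :=
  exists s, [/\ ucay_cycle n s, ucay_dominating n s & size s = k].

(* cycle domination number gamma_c(X_n) (0 if X_n has no dominating cycle) *)
Definition gamma_c (n : nat) : nat :=
  match excluded_middle_informative
          (exists k, pbool (has_dom_cycle_of_size n k)) with
  | left h => ex_minn h
  | right _ => 0
  end.

(* Jacobsthal function: least m >= 1 such that every m consecutive integers
   contain one coprime to n (0 if no such m, i.e. n = 0). *)
Definition jac_ok (n m : nat) : Prop :=
  0 < m /\ forall a : int, exists2 i : nat, i < m & coprimez (a + i%:Z)%R n%:Z.

Definition jacobsthal (n : nat) : nat :=
  match excluded_middle_informative (exists m, pbool (jac_ok n m)) with
  | left h => ex_minn h
  | right _ => 0
  end.

Definition omega (n : nat) : nat := size (primes n).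

(* Main.v *)
Require Import Defs.
From HB Require Import structures.
From mathcomp Require Import all_boot all_order all_algebra zify ring.
From Stdlib Require Import ClassicalEpsilon.
Import Order.TTheory GRing.Theory Num.Theory.

Lemma pboolP (P : Prop) : pbool P = true <-> P.
Proof.
by rewrite /pbool; case: excluded_middle_informative => h; split => // /h.
Qed.

Lemma cz_shift (x z d : int) : coprimez (x + z * d)%R d = coprimez x d.
Proof. by rewrite /coprimez gcdzC addrC gcdzMDl gcdzC. Qed.

Lemma count_period (P : pred nat) : (forall s, P (s + 30) = P s) ->
  forall c, count P (iota c 30) = count P (iota 0 30).
Proof.
move=> HP; elim=> [//|c IH].
have E1 : iota c 31 = c :: iota c.+1 30 by [].
have E2 : iota c 31 = iota c 30 ++ [:: c + 30] by rewrite (iotaD c 30 1).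
have h : count P (iota c 30) + P (c + 30) = P c + count P (iota c.+1 30).
  rewrite -[RHS]/(count P (c :: iota c.+1 30)) -E1 E2 count_cat.
  by rewrite [count P [:: _]]/= addn0.
rewrite HP IH in h; lia.
Qed.

Lemma count_periodk (P : pred nat) : (forall s, P (s + 30) = P s) ->
  forall k c, count P (iota c (30 * k)) = k * count P (iota 0 30).
Proof.
move=> HP; elim=> [//|k IH] c.
by rewrite mulnS iotaD count_cat count_period // IH mulSn.
Qed.

Definition tau : seq nat := [:: 0;1;12;23;10;21;14;7;18;25;26;27;28;15;22;29].

Lemma C1 : all (fun r => count (fun s : nat => coprimez (s%:Z - r%:Z) 30) (iota 0 30) == 8) (iota 0 30).
Proof. by vm_compute. Qed.
Lemma C2 : all (fun r => (4 <= count (fun s : nat => coprimez (s%:Z - r%:Z) 30) tau)) (iota 0 30).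
Proof. by vm_compute. Qed.
Lemma C3 : count (fun j => coprime j 30) (iota 20 17) = 3.
Proof. by vm_compute. Qed.
Lemma C4 : count (fun j => coprime j 30) (iota 0 30) = 8.
Proof. by vm_compute. Qed.

Definition FF k := (30 * k + 100)`!.
Definition qq k j := pdiv (1 + FF k * (FF k %/ j)).
Definition WW k := iota 20 (17 + 30 * k).
Definition LL k := [seq j <- WW k | coprime j 30].
Definition QQ k := \prod_(j <- LL k) qq k j.
Definition nn k := 30 * QQ k.
Definition SS k := map (addn (30 * k)) tau ++ iota 0 (30 * k).

Lemma qq_facts k j : 0 < j <= 30 * k + 100 ->
  [/\ prime (qq k j), 30 * k + 100 < qq k j & qq k j %| FF k * FF k + j].
Proof.
move=> hj; rewrite /qq; set f := FF k.
have jf : j %| f := dvdn_fact hj.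
have fpos : 0 < f := fact_gt0 _.
have dpos : 0 < f %/ j.
  by rewrite divn_gt0 ?(dvdn_leq fpos jf) //; case/andP: hj.
have x1 : 1 < 1 + f * (f %/ j).
  have : 0 < f * (f %/ j) by rewrite muln_gt0 fpos dpos.
  lia.
have pq := pdiv_prime x1.
split => //.
- rewrite ltnNge; apply/negP => qF.
  have qf : pdiv (1 + f * (f %/ j)) %| f.
    by apply: dvdn_fact; rewrite prime_gt0.
  have := pdiv_dvd (1 + f * (f %/ j)).
  rewrite dvdn_addl ?dvdn_mulr // dvdn1 => /eqP e.
  by rewrite e in pq.
- have -> : f * f + j = j * (1 + f * (f %/ j)).
    by rewrite mulnDr muln1 addnC mulnCA [j * _]mulnC divnK.
  exact: dvdn_mull (pdiv_dvd _).
Qed.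

Lemma qq_inj k j j' : 0 < j <= 30 * k + 100 -> 0 < j' <= 30 * k + 100 ->
  qq k j = qq k j' -> j = j'.
Proof.
wlog le : j j' / j <= j'.
  move=> H hj hj' e; case: (leqP j j') => l; first exact: H.
  by symmetry; apply: H => //; exact: ltnW.
move=> hj hj' e.
have [_ F1 d1] := qq_facts k j hj.
have [_ _ d2] := qq_facts k j' hj'.
rewrite e in d1 F1.
have := dvdn_sub d2 d1.
have -> : FF k * FF k + j' - (FF k * FF k + j) = j' - j.
  by move: (FF k * FF k) => ff; lia.
case: (posnP (j' - j)) => [z|p]; first by lia.
by rewrite gtnNdvd //; lia.
Qed.

Lemma LL_mem k j : j \in LL k -> [/\ 20 <= j < 37 + 30 * k, coprime j 30 & 0 < j <= 30 * k + 100].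
Proof.
rewrite mem_filter mem_iota => /andP [c /andP [a b]].
split => //; [by rewrite a | lia].
Qed.

Lemma LL_q k j : j \in LL k -> prime (qq k j) /\ 30 * k + 100 < qq k j.
Proof. by case/LL_mem => _ _ /(qq_facts k j) [? ? _]. Qed.

Lemma size_LL k : size (LL k) = 8 * k + 3.
Proof.
rewrite size_filter /WW iotaD count_cat C3 count_periodk ?C4.
  by rewrite addnC mulnC.
by move=> s; rewrite -coprime_modl modnDr coprime_modl.
Qed.

Lemma coprime_QQ k x : coprime x (QQ k) = all (fun j => coprime x (qq k j)) (LL k).
Proof.
rewrite /QQ; elim: (LL k) => [|j s IH]; first by rewrite big_nil coprimen1.
by rewrite big_cons coprimeMr IH.
Qed.

Lemma QQ_dvd k j : j \in LL k -> qq k j %| QQ k.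
Proof. by move=> h; rewrite /QQ (big_rem j) //= dvdn_mulr. Qed.

Lemma QQ_gt0 k : 0 < QQ k.
Proof. by apply: prodn_gt0 => j; exact: pdiv_gt0. Qed.

Lemma in_LL23 k : 23 \in LL k.
Proof. by rewrite mem_filter mem_iota; apply/andP; split => //; lia. Qed.

Lemma nn_big k : 30 * k + 100 < nn k.
Proof.
have [_ h] := LL_q k 23 (in_LL23 k).
have := dvdn_leq (QQ_gt0 k) (QQ_dvd k 23 (in_LL23 k)).
rewrite /nn; lia.
Qed.

Lemma cz0 : coprimez 0 30 = false. Proof. by []. Qed.

Lemma adjS k a b : a < 30 * k + 30 -> b < 30 * k + 30 ->
  coprimez (a%:Z - b%:Z)%R 30 -> ucay_adj (nn k) a b.
Proof.
move=> ha hb c; rewrite /ucay_adj.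
have ab : a != b by apply/eqP => e; rewrite e subrr in c.
rewrite ab /nn PoszM coprimezMr c /= coprimezE /= coprime_QQ.
apply/allP => j hj; have [pq qb] := LL_q k j hj.
rewrite coprime_sym prime_coprime // gtnNdvd //; lia.
Qed.

Lemma SS_lt k s : s \in SS k -> s < 30 * k + 30.
Proof.
rewrite mem_cat => /orP [/mapP [t ht ->]|]; last by rewrite mem_iota; lia.
have : t < 30 by move: t ht; apply/allP.
lia.
Qed.

Lemma uniq_SS k : uniq (SS k).
Proof.
rewrite cat_uniq iota_uniq map_inj_uniq ?andbT; last exact: addnI.
apply/andP; split => //; apply/hasPn => x; rewrite mem_iota => hx.
by apply/mapP => -[t _ e]; lia.
Qed.

Lemma size_SS k : size (SS k) = 30 * k + 16.
Proof. by rewrite size_cat size_map size_iota addnC. Qed.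

Lemma Pr_shift (v s : nat) : coprimez (s%:Z - v%:Z)%R 30 = coprimez (s%:Z - (v %% 30)%:Z)%R 30.
Proof.
rewrite {1}(divn_eq v 30) PoszD PoszM.
have -> : (s%:Z - ((v %/ 30)%:Z * 30%:Z + (v %% 30)%:Z))%R
   = (s%:Z - (v %% 30)%:Z + (- (v %/ 30)%:Z) * 30)%R by ring.
by rewrite cz_shift.
Qed.

Lemma count_block k v : count (fun s : nat => coprimez (s%:Z - v%:Z)%R 30) (iota 0 (30 * k)) = 8 * k.
Proof.
rewrite count_periodk.
  rewrite (eq_count (a2 := fun s : nat => coprimez (s%:Z - (v %% 30)%:Z)%R 30)); last first.
    by move=> s; rewrite Pr_shift.
  have /allP := C1; move/(_ (v %% 30)); rewrite mem_iota /= ltn_pmod // => /(_ isT) /eqP ->.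
  by rewrite mulnC.
move=> s; rewrite PoszD.
have -> : ((s%:Z + 30%:Z) - v%:Z = (s%:Z - v%:Z) + 1 * 30)%R by ring.
by rewrite cz_shift.
Qed.

Lemma count_tau k v : 4 <= count (fun s : nat => coprimez (s%:Z - v%:Z)%R 30) (map (addn (30 * k)) tau).
Proof.
rewrite count_map.
rewrite (eq_count (a2 := fun s : nat => coprimez (s%:Z - (v %% 30)%:Z)%R 30)); last first.
  move=> t /=; rewrite Pr_shift PoszD PoszM.
  have -> : ((30%:Z * k%:Z + t%:Z) - (v %% 30)%:Z = (t%:Z - (v %% 30)%:Z) + k%:Z * 30)%R by ring.
  by rewrite cz_shift.
have /allP := C2; move/(_ (v %% 30)); rewrite mem_iota /= ltn_pmod //; exact.
Qed.

Lemma dom_has k v : has (fun u => ucay_adj (nn k) u v) (SS k).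
Proof.
apply/negPn/negP => hn.
set C := [seq s <- SS k | coprimez (s%:Z - v%:Z)%R 30].
have sizeC : 8 * k + 4 <= size C.
  rewrite size_filter /SS count_cat count_block.
  have := count_tau k v; lia.
set dv := fun s : nat => `|(s%:Z - v%:Z)%R|%N.
have hall : forall s, s \in C -> has (fun j => qq k j %| dv s) (LL k).
  move=> s; rewrite mem_filter => /andP [cs sS].
  have : ~~ ucay_adj (nn k) s v.
    by apply/negP => h; move/negP: hn; apply; apply/seq.hasP; exists s.
  rewrite /ucay_adj => /nandP [/negPn/eqP e|]; first by rewrite e subrr in cs.
  rewrite /nn PoszM coprimezMr cs andTb coprimezE absz_nat coprime_QQ.
  move=> /allPn [j jL hj]; apply/seq.hasP; exists j => //.
  have [pq _] := LL_q k j jL.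
  by rewrite coprime_sym prime_coprime // negbK in hj.
set f := fun s => nth 0 (LL k) (find (fun j => qq k j %| dv s) (LL k)).
have fL : forall s, s \in C -> f s \in LL k.
  by move=> s hs; apply: mem_nth; rewrite -has_find; apply: hall.
have fd : forall s, s \in C -> qq k (f s) %| dv s.
  by move=> s hs; apply: (nth_find 0 (hall s hs)).
have Clt : forall s, s \in C -> s < 30 * k + 30.
  by move=> s; rewrite mem_filter => /andP [_ /SS_lt].
have finj : {in C &, injective f}.
  move=> s s' hs hs' e.
  have d1 := fd s hs; rewrite e in d1; have d2 := fd s' hs'.
  have [_ qb] := LL_q k _ (fL s' hs').
  move: d1 d2 qb; set q := qq k (f s') => d1 d2 qb.
  have /dvdzP [a Ea] : (q%:Z %| (s%:Z - v%:Z)%R)%Z by rewrite dvdzE.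
  have /dvdzP [b Eb] : (q%:Z %| (s'%:Z - v%:Z)%R)%Z by rewrite dvdzE.
  have D : (q%:Z %| (s%:Z - s'%:Z)%R)%Z.
    apply/dvdzP; exists (a - b)%R.
    have -> : (s%:Z - s'%:Z = (s%:Z - v%:Z) - (s'%:Z - v%:Z))%R by ring.
    by rewrite Ea Eb; ring.
  rewrite dvdzE /= in D.
  case: (eqVneq s s') => // ne.
  have hs1 := Clt s hs; have hs2 := Clt s' hs'.
  rewrite gtnNdvd in D => //; lia.
have := uniq_leq_size (s1 := map f C) (s2 := LL k).
rewrite map_inj_in_uniq // filter_uniq ?uniq_SS // size_map size_LL.
have sub : {subset map f C <= LL k} by move=> x /mapP [s hs ->]; exact: fL.
move=> /(_ isT sub); lia.
Qed.

Definition e1 (a b : nat) := coprimez (a%:Z - b%:Z)%R 30.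
Arguments e1 : simpl never.

Lemma e1_shift M a b : e1 (M + a) (M + b) = e1 a b.
Proof.
rewrite /e1 !PoszD.
by have -> : ((M%:Z + a%:Z) - (M%:Z + b%:Z) = a%:Z - b%:Z)%R by ring.
Qed.

Lemma path_iota (e : rel nat) x m : (forall i, e i i.+1) -> path e x (iota x.+1 m).
Proof. by move=> h; elim: m x => //= m IH x; rewrite h IH. Qed.

Lemma cycle_SS k : 0 < k -> cycle (ucay_adj (nn k)) (SS k).
Proof.
move=> kpos.
apply: (sub_in_cycle (P := fun x => x < 30 * k + 30) (e := e1)).
- by move=> a b ha hb; exact: adjS.
- by apply/allP => x; exact: SS_lt.
have cyc : forall x p, cycle e1 (x :: p) = path e1 x (rcons p x) by [].
have pc : forall x y p, path e1 x (y :: p) = e1 x y && path e1 y p by [].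
set M := 30 * k.
have [m eM] : exists m, M = m.+1 by exists (M.-1); rewrite /M; lia.
have E1 : map (addn M) tau = (M + 0) :: map (addn M) (behead tau) by [].
have E2 : iota 0 M = 0 :: iota 1 m by rewrite eM.
rewrite /SS -/M E1 E2 cat_cons cyc rcons_cat cat_path last_map pc.
apply/and3P; split.
- by rewrite /= !e1_shift.
- have -> : last 0 (behead tau) = 29 by [].
  rewrite /e1 PoszD /M PoszM subr0.
  have -> : (30%:Z * k%:Z + 29%:Z = 29%:Z + k%:Z * 30)%R by ring.
  by rewrite cz_shift.
change (path e1 0 (rcons (iota 1 m) (M + 0))).
have -> : rcons (iota 1 m) (M + 0) = iota 1 m.+1.
  rewrite addn0 eM; have := iotaD 1 m 1; rewrite addn1 add1n cats1 => ->; done.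
apply: path_iota => i.
rewrite /e1.
by have -> : (i%:Z - i.+1%:Z = (-1))%R by rewrite -addn1 PoszD; ring.
Qed.

Lemma nn_gt0 k : 0 < nn k.
Proof. by rewrite /nn muln_gt0 QQ_gt0. Qed.

Lemma not_jac k m : 0 < m -> m <= 30 * k + 17 -> ~ jac_ok (nn k) m.
Proof.
move=> m0 mb [_ h].
have [i im ci] := h (Posz (FF k * FF k + 20)).
rewrite -PoszD -addnA coprimezE !absz_nat in ci.
set j := 20 + i in ci.
have hj : 0 < j <= 30 * k + 100 by rewrite /j; lia.
have n30 : 30 %| nn k by rewrite /nn dvdn_mulr.
case cj: (coprime j 30).
- have jL : j \in LL k by rewrite mem_filter cj mem_iota /j; lia.
  have [pq _ dq] := qq_facts k j hj.
  have qn : qq k j %| nn k by rewrite /nn dvdn_mull // QQ_dvd.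
  have := coprime_dvdr qn ci.
  by rewrite coprime_sym prime_coprime // dq.
- have := coprime_dvdr n30 ci.
  have f30 : 30 %| FF k * FF k by rewrite dvdn_mulr // dvdn_fact //; lia.
  rewrite -coprime_modl -modnDml.
  move: f30; rewrite /dvdn => /eqP ->; rewrite add0n coprime_modl.
  by rewrite cj.
Qed.

Lemma jac_exists n : 0 < n -> jac_ok n n.
Proof.
move=> n0; split => // a.
have nz : (n%:Z != 0)%R by rewrite eqz_nat -lt0n.
set r := ((1 - a) %% n%:Z)%Z.
have r0 : (0 <= r)%R by apply: modz_ge0.
have rn : (r < n%:Z)%R by apply: ltz_pmod; rewrite ltz_nat.
have er : (`|r|%N%:Z = r)%R by lia.
exists `|r|%N; first by lia.
rewrite er.
have E := divz_eq (1 - a)%R n%:Z.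
move: E; set z := ((1 - a) %/ n%:Z)%Z => E.
have Er : r = (1 - a - z * n%:Z)%R by rewrite [in RHS]E; ring.
have -> : (a + r = 1 + (- z) * n%:Z)%R by rewrite Er; ring.
by rewrite cz_shift coprimezE /= coprime1n.
Qed.

Lemma jac_ge k : 30 * k + 18 <= jacobsthal (nn k).
Proof.
rewrite /jacobsthal; case: excluded_middle_informative => [h|h]; last first.
  by exfalso; apply: h; exists (nn k); apply/pboolP; apply: jac_exists; exact: nn_gt0.
case: ex_minnP => m /pboolP hm _.
rewrite leqNgt; apply/negP => lt.
apply: (not_jac k m) => //; [by case: hm | lia].
Qed.

Lemma gam_le k : 0 < k -> gamma_c (nn k) <= 30 * k + 16.
Proof.
move=> kpos.
have H : has_dom_cycle_of_size (nn k) (30 * k + 16).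
  exists (SS k); split; last exact: size_SS.
  - split; [|exact: uniq_SS|by rewrite size_SS; lia|exact: cycle_SS].
    apply/allP => x /SS_lt hx; rewrite /ucay_vertex.
    have := nn_big k; lia.
  - move=> v _; right; have /seq.hasP [u hu huv] := dom_has k v.
    by exists u.
rewrite /gamma_c; case: excluded_middle_informative => [h|h]; last first.
  by exfalso; apply: h; exists (30 * k + 16); apply/pboolP.
case: ex_minnP => m _ minm; apply: minm; exact/pboolP.
Qed.

Lemma omega_ge k : 8 * k + 3 <= omega (nn k).
Proof.
rewrite /omega -size_LL -(size_map (qq k)).
apply: uniq_leq_size.
  rewrite map_inj_in_uniq; first by rewrite filter_uniq // iota_uniq.
  move=> j j' hj hj'.
  have [_ _ a] := LL_mem k j hj; have [_ _ b] := LL_mem k j' hj'.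
  exact: qq_inj.
move=> x /mapP [j hj ->].
have [pq _] := LL_q k j hj.
by rewrite mem_primes pq nn_gt0 /nn dvdn_mull // QQ_dvd.
Qed.

Theorem theorem3p1 :
  forall N : nat, exists n : nat,
    [/\ 0 < n, gamma_c n + 2 <= jacobsthal n & N < omega n].
Proof.
move=> N; exists (nn N.+1); split.
- exact: nn_gt0.
- have := gam_le N.+1 (ltn0Sn N); have := jac_ge N.+1; lia.
- have := omega_ge N.+1; lia.
Qed.
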